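(* Let $\mathcal G$ be a braided stability groupoid, $R$ a commutative ring, $V$ a $U\mathcal G$-module and $d\in\mathbb N$. If $\mathrm{coker}\,V$ is generated in ranks $\le d-1$, then $V$ is generated in ranks $\le d$.
   Context: Stability groupoid: monoidal groupoid $(\mathcal G,\oplus,0)$ with objects $(\mathbb N,+,0)$, $G_n=\mathrm{Aut}(n)$, $\oplus\colon G_m\times G_n\to G_{m+n}$ injective, $G_0$ trivial, $(G_{l+m}\times1)\cap(1\times G_{m+n})=1\times G_m\times1$ in $G_{l+m+n}$; braided: with braiding $b_{m,n}\in G_{m+n}$. $U\mathcal G$: objects $\mathbb N$, $\mathrm{Hom}(m,n)=G_n/G_{n-m}$ for $m\le n$ ($G_{n-m}\subset G_n$ via $g\mapsto g\oplus\mathrm{id}_m$), empty otherwise, composition $fG_l\circ gG_m=f(\mathrm{id}_l\oplus g)G_{l+m}$, monoidal via $f_1G_{m_1}\oplus f_2G_{m_2}=(f_1\oplus f_2)(\mathrm{id}_{m_1}\oplus b^{-1}_{n_1,m_2}\oplus\mathrm{id}_{n_2})G_{m_1+m_2}$; $0$ initial, $\iota_n\colon0\to n$. A $U\mathcal G$-module is a functor $V\colon U\mathcal G\to R\text{-Mod}$; it is generated in ranks $\le m$ if it is a quotient of $\bigoplus_jR\mathrm{Hom}(m_j,-)$ with all $m_j\le m$. $\mathrm{coker}\,V$ is the cokernel of the natural map $V\to V(1\oplus-)$ with components $V(\iota_1\oplus\mathrm{id}_n)$. *)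

(* Defs.v *)
From HB Require Import structures.
From mathcomp Require Import all_boot all_order all_algebra.
Set Implicit Arguments. Unset Strict Implicit. Unset Printing Implicit Defensive.
Import GRing.Theory.

(* Total transport along index equality: the identity transport when m = n,
   a junk value otherwise (only ever used at equal indices). *)
Definition tcast (G : nat -> Type) (one : forall n, G n) (m n : nat) (g : G m) : G n :=
  match @eqP _ m n with
  | ReflectT e => eq_rect m G g n e
  | ReflectF _ => one n
  end.
Arguments tcast {G} one m n g.

(* Group multiplication
   [mul f g] is composition "f after g". *)
Record BSG := {
  Gr :> nat -> Type;
  gmul : forall n, Gr n -> Gr n -> Gr n;
  gone : forall n, Gr n;
  ginv : forall n, Gr n -> Gr n;
  gmulA : forall n (x y z : Gr n), gmul x (gmul y z) = gmul (gmul x y) z;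
  gmul1 : forall n (x : Gr n), gmul (gone n) x = x;
  gmulV : forall n (x : Gr n), gmul (ginv x) x = gone n;
  oplus : forall m n, Gr m -> Gr n -> Gr (m + n);
  oplus_mul : forall m n (a a' : Gr m) (c c' : Gr n),
      oplus (gmul a a') (gmul c c') = gmul (oplus a c) (oplus a' c');
  oplus_one : forall m n, oplus (gone m) (gone n) = gone (m + n);
  oplus_assoc : forall l m n (a : Gr l) (c : Gr m) (e : Gr n),
      tcast gone (l + m + n) (l + (m + n)) (oplus (oplus a c) e)
      = oplus a (oplus c e);
  oplus_unitl : forall n (g : Gr n), tcast gone (0 + n) n (oplus (gone 0) g) = g;
  oplus_unitr : forall n (g : Gr n), tcast gone (n + 0) n (oplus g (gone 0)) = g;
  oplus_inj : forall m n (a a' : Gr m) (c c' : Gr n),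
      oplus a c = oplus a' c' -> a = a' /\ c = c';
  G0_trivial : forall g : Gr 0, g = gone 0;
  oplus_cap : forall l m n (w : Gr (l + (m + n))),
      ((exists x : Gr (l + m), w = tcast gone (l + m + n) (l + (m + n)) (oplus x (gone n)))
       /\ (exists y : Gr (m + n), w = oplus (gone l) y))
      <-> (exists z : Gr m, w = oplus (gone l) (oplus z (gone n)));
  braid : forall m n, Gr (m + n);
  braid_nat : forall m n (g : Gr m) (h : Gr n),
      gmul (braid m n) (oplus g h)
      = gmul (tcast gone (n + m) (m + n) (oplus h g)) (braid m n);
  braid_hex1 : forall l m n,
      braid l (m + n)
      = gmul (tcast gone (m + (l + n)) (l + (m + n)) (oplus (gone m) (braid l n)))
             (tcast gone (l + m + n) (l + (m + n)) (oplus (braid l m) (gone n)));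
  braid_hex2 : forall l m n,
      braid (l + m) n
      = gmul (tcast gone (l + n + m) (l + m + n) (oplus (braid l n) (gone m)))
             (tcast gone (l + (m + n)) (l + m + n) (oplus (gone l) (braid m n)))
}.

Arguments gone {b} n.
Arguments gmul {b n} _ _.
Arguments ginv {b n} _.
Arguments oplus {b m n} _ _.
Arguments braid {b} m n.

Section UG.
Local Unset Implicit Arguments.
Variable S : BSG.
Local Notation cast := (tcast (@gone S)).

(* Hom(m,n) (m <= n) is
   G_n / G_(n-m), G_(n-m) embedded via h |-> h + id_m; a morphism is given by
   a representative f in G_n, and [act m n f] must only depend on the coset.
   Composition: fG_l o gG_m = f (id_l + g) G_(l+m).  ([act m n] for m > n is
   meaningless junk and never used.) *)
Record UGmod (R : comPzRingType) := {
  Vm :> nat -> lmodType R;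
  act : forall m n, S n -> Vm m -> Vm n;
  act_linear : forall m n (f : S n), m <= n -> linear (act m n f);
  act_coset : forall m n (f : S n) (h : S (n - m)), m <= n ->
      act m n (gmul f (cast (n - m + m) n (oplus h (gone m)))) = act m n f;
  act_id : forall m (v : Vm m), act m m (gone m) v = v;
  act_comp : forall m n p (f : S p) (g : S n) (v : Vm m), m <= n -> n <= p ->
      act m p (gmul f (cast (p - n + n) p (oplus (gone (p - n)) g))) v
      = act n p f (act m n g v)
}.

Variable R : comPzRingType.

(* W (with morphism action actW) modulo the submodules K n is generated in
   ranks < e: there is a family of elements x_j in W(m_j), m_j < e, such that
   the induced map  (+)_j R Hom(m_j, -) -> W/K  is surjective, i.e. every
   w in W n is a finite R-combination of images of the x_j, up to K n. *)
Definition gen_lt (W : nat -> lmodType R) (actW : forall m n, S n -> W m -> W n)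
    (K : forall n, W n -> Prop) (e : nat) : Prop :=
  exists (J : Type) (mj : J -> nat) (x : forall j, W (mj j)),
    (forall j, mj j < e) /\
    forall n (w : W n),
      exists (s : seq {j : J & (S n * R)%type}) (k : W n),
        all (fun t => mj (tag t) <= n) s /\ K n k /\
        (w = \sum_(t <- s) (tagged t).2 *: actW (mj (tag t)) n (tagged t).1 (x (tag t)) + k)%R.

Variable V : UGmod R.

Definition generated_le (d : nat) : Prop :=
  gen_lt (Vm _ V) (act _ V) (fun n (v : Vm _ V n) => v = 0%R) d.+1.

(* The module V(1 + -): on f G_(b-a) : a -> b it acts by V(id_1 G_0 + f G_(b-a)),
   i.e. by (id_1 + f)(id_0 + b^-1_(1,b-a) + id_a) G_(b-a) : 1+a -> 1+b. *)
Definition Vshift (n : nat) : lmodType R := Vm _ V (1 + n).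
Definition shift_act (a b : nat) (f : S b) : Vshift a -> Vshift b :=
  act _ V (1 + a) (1 + b)
    (gmul (oplus (gone 1) f)
          (cast (0 + (1 + (b - a) + a)) (1 + b)
                (oplus (gone 0) (oplus (ginv (braid 1 (b - a))) (gone a))))).

(* Component V(iota_1 + id_n) : V n -> V (1 + n); iota_1 + id_n is
   (id_1 + id_n)(id_1 + b^-1_(0,0) + id_n) G_1. *)
Definition stab_map (n : nat) : Vm _ V n -> Vshift n :=
  act _ V n (1 + n)
    (gmul (oplus (gone 1) (gone n))
          (cast (1 + (0 + 0 + n)) (1 + n)
                (oplus (gone 1) (oplus (ginv (braid 0 0)) (gone n))))).

(* coker V = V(1+-) / im(V -> V(1+-)) generated in ranks <= d - 1
   (i.e. ranks < d; for d = 0 this means coker V = 0). *)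
Definition coker_generated_lt (d : nat) : Prop :=
  gen_lt Vshift shift_act (fun n (v : Vshift n) => exists w : Vm _ V n, v = stab_map n w) d.

End UG.
Arguments act {S R} _ _ _ _ _.
Arguments gen_lt {S R} W actW K e.
Arguments generated_le {S R} V d.
Arguments coker_generated_lt {S R} V d.

(* Main.v *)
Require Import Defs.
From HB Require Import structures.
From mathcomp Require Import all_boot all_order all_algebra.
Import GRing.Theory.

Lemma act_sum (S : BSG) (R : comPzRingType) (V : UGmod S R) m n (f : S n)
  (T : Type) (s : seq T) (r : T -> R) (v : T -> V m) : m <= n ->
  Defs.act V m n f (\sum_(t <- s) r t *: v t)%R = (\sum_(t <- s) r t *: Defs.act V m n f (v t))%R.
Proof.
move=> mn; have L := @Defs.act_linear _ _ V m n f mn.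
have A0 : Defs.act V m n f 0%R = 0%R.
  have := L (-1)%R 0%R 0%R.
  by rewrite scaler0 addr0 scaleN1r addNr => <-.
elim: s => [|t s IH]; first by rewrite !big_nil.
rewrite !big_cons.
have := L (r t) (v t) (\sum_(t <- s) r t *: v t)%R.
by rewrite IH => ->.
Qed.

Lemma sum_all_eq (T : Type) (M : nmodType) (P : pred T) (s : seq T) (F G : T -> M) :
  all P s -> (forall t, P t -> F t = G t) -> (\sum_(t <- s) F t)%R = (\sum_(t <- s) G t)%R.
Proof.
move=> H E; elim: s H => [|t s IH] /=; first by rewrite !big_nil.
by case/andP => Pt Ps; rewrite !big_cons E // IH.
Qed.

Theorem proposition7p5 (S : BSG) (R : comPzRingType) (V : UGmod S R) (d : nat) :
  coker_generated_lt V d -> generated_le V d.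
Proof.
move=> [J' [mj' [x' [Hmj' Hc]]]].
pose J := {m : 'I_d.+1 & V m}.
exists J, (fun j : J => nat_of_ord (tag j)), (fun j : J => tagged j).
split; first by move=> j; exact: ltn_ord.
elim=> [|k IH] w.
  have H0 : 0 < d.+1 by [].
  exists [:: existT (fun _ => (S 0 * R)%type) (existT (fun m : 'I_d.+1 => V m) (Ordinal H0) w) (gone 0, 1%R)], 0%R.
  split; first by [].
  split; first by [].
  by rewrite big_cons big_nil /= scale1r Defs.act_id !addr0.
case: (leqP k.+1 d) => hk.
  have H0 : k.+1 < d.+1 by [].
  exists [:: existT (fun _ => (S k.+1 * R)%type) (existT (fun m : 'I_d.+1 => V m) (Ordinal H0) w) (gone k.+1, 1%R)], 0%R.
  split; first by rewrite /= leqnn.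
  split; first by [].
  by rewrite big_cons big_nil /= scale1r Defs.act_id !addr0.
have [s' [k' [Hall [[w0 ->] Hw]]]] := Hc k w.
have [s0 [k0 [Hall0 [-> Hw0]]]] := IH w0.
pose g0 := (gmul (oplus (gone 1) (gone k))
          (Defs.tcast (@gone S) (1 + (0 + 0 + k)) (1 + k)
                (oplus (gone 1) (oplus (ginv (braid 0 0)) (gone k))))) : S k.+1.
pose F := fun t : {j : J' & (S k * R)%type} =>
  existT (fun _ : J => (S k.+1 * R)%type)
    (existT (fun m : 'I_d.+1 => V m) (@Ordinal d.+1 (1 + mj' (tag t)) (Hmj' (tag t))) (x' (tag t)))
    ((gmul (oplus (gone 1) (tagged t).1)
          (Defs.tcast (@gone S) (0 + (1 + (k - mj' (tag t)) + mj' (tag t))) (1 + k)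
                (oplus (gone 0) (oplus (ginv (braid 1 (k - mj' (tag t)))) (gone (mj' (tag t))))))),
     (tagged t).2).
pose G := fun t : {j : J & (S k * R)%type} =>
  existT (fun _ : J => (S k.+1 * R)%type) (tag t)
    (gmul g0 (Defs.tcast (@gone S) (k.+1 - k + k) k.+1 (oplus (gone (k.+1 - k)) (tagged t).1)),
     (tagged t).2).
exists (map F s' ++ map G s0), 0%R.
split.
  rewrite all_cat !all_map; apply/andP; split.
    by apply: sub_all Hall => t /=.
  by apply: sub_all Hall0 => t /= h; exact: leqW.
split; first by [].
rewrite addr0 big_cat /= !big_map Hw Hw0 addr0.
congr (_ + _)%R.
rewrite /stab_map.
rewrite (@act_sum _ _ V _ _ _ _ _ (fun t => (tagged t).2) (fun t => Defs.act V _ k (tagged t).1 (tagged (tag t)))) ?leqnSn //.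
apply: (@sum_all_eq _ (V k.+1) _ s0 _ _ Hall0) => t /= ht; congr (_ *: _)%R.
by rewrite -Defs.act_comp // leqnSn.
Qed.
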